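(* Fix a tomographically complete measurement $\mu^\diamond$ on $\mathcal X=\mathbb C^n$ with finite outcome set $\mathcal Y$. For every quantum property $\Gamma:\mathrm{Dens}(\mathcal X)\to\mathcal R$, $\mathrm{elic}_Q(\Gamma)=\mathrm{elic}_{\mathcal P^\diamond}(\Gamma^\diamond)$.
   Context: $\mathrm{Herm}(\mathcal X)$ Hermitian matrices with $\langle X,Y\rangle=\mathrm{Tr}(X^*Y)$; $\mathrm{Dens}(\mathcal X)$ density matrices. A measurement is a family $\{\mu_y\}_{y\in\mathcal Y}$ of positive semidefinite operators summing to $I$; tomographically complete if its real span is $\mathrm{Herm}(\mathcal X)$. $\phi:\mathrm{Herm}(\mathcal X)\to\mathbb R^{\mathcal Y}$, $(\phi X)_y=\langle\mu^\diamond_y,X\rangle$; $\phi^+$ its Moore–Penrose pseudoinverse; $\mathcal P^\diamond=\phi(\mathrm{Dens}(\mathcal X))$; $\Gamma^\diamond(p)=\Gamma(\phi^+p)$ for $p\in\mathcal P^\diamond$. Quantum elicitability: there is a quantum score $S=(s,\mu)$, $s:\mathcal R\times\mathbb N\to\mathbb R$, $\mu(r)$ a measurement, with $\{\Gamma(\rho)\}=\arg\max_r\sum_y\langle\mu(r)_y,\rho\rangle s(r,y)$ for all $\rho$. Classical elicitability on $\mathcal P$: there is $\hat s:\mathcal R\times\mathcal Y\to\mathbb R$ with $\{\Gamma(p)\}=\arg\max_r\sum_yp_y\hat s(r,y)$ for all $p\in\mathcal P$. Quantum identifiability of $\hat\Gamma:\mathrm{Dens}(\mathcal X)\to\mathbb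 R^k$: for each $r$ in the range there is $V(r)\in\mathrm{Herm}(\mathcal X)^k$ with $\hat\Gamma(\rho)=r\iff\langle V(r)_i,\rho\rangle=0\ \forall i$; classical identifiability on $\mathcal P$: for each $r$ there is $v(r)\in\mathbb R^{k\times\mathcal Y}$ with $\hat\Gamma(p)=r\iff v(r)p=0$. $\Gamma$ is $k$-elicitable if there exist an elicitable and identifiable $\hat\Gamma$ with values in $\mathbb R^k$ (on the same domain) and a map $\psi:\mathbb R^k\to\mathcal R$ with $\Gamma=\psi\circ\hat\Gamma$. $\mathrm{elic}_Q(\Gamma)$ (resp. $\mathrm{elic}_{\mathcal P}(\Gamma)$) is the least such $k$ in the quantum (resp. classical, domain $\mathcal P$) sense. *)

(* Defs.v *)
From HB Require Import structures.
From mathcomp Require Import all_boot all_order all_algebra.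
From mathcomp Require Import boolp classical_sets reals.
From mathcomp Require Import complex.

Set Implicit Arguments.
Unset Strict Implicit.
Unset Printing Implicit Defensive.

Import Order.TTheory GRing.Theory Num.Theory.
Local Open Scope ring_scope.

Section QuantumElic.
Variables (R : realType) (n : nat).

Local Notation C := (R[i]).
Local Notation mx := ('M[C]_n).

Definition cadj m p (A : 'M[C]_(m, p)) : 'M[C]_(p, m) := map_mx (@conjc R) (A^T).

Definition herm (A : mx) : Prop := cadj A = A.

Definition psd (A : mx) : Prop :=
  herm A /\ forall v : 'cV[C]_n, 0 <= (cadj v *m A *m v) 0 0.

Definition density (rho : mx) : Prop := psd rho /\ \tr rho = 1.

Definition ip (A B : mx) : C := \tr (cadj A *m B).

(* its real part (equal to <X,Y> when X, Y are Hermitian) *)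
Definition ipR (A B : mx) : R := complex.Re (ip A B).

Definition measurement (Y : finType) (mu : Y -> mx) : Prop :=
  (forall y, psd (mu y)) /\ \sum_(y : Y) mu y = 1%:M.

(* A measurement whose outcomes are labelled by natural numbers 0 .. N-1
   (finitely many outcomes; outcome y is the y-th entry of the sequence) *)
Definition nat_measurement (mu : seq mx) : Prop :=
  (forall y, (y < size mu)%N -> psd (nth 0 mu y)) /\ \sum_(A <- mu) A = 1%:M.

Definition tomo_complete (Y : finType) (mu : Y -> mx) : Prop :=
  forall H : mx, herm H ->
    exists c : Y -> R, H = \sum_(y : Y) ((c y)%:C)%C *: mu y.

Definition phi (Y : finType) (mu : Y -> mx) (X : mx) : Y -> R :=
  fun y => ipR (mu y) X.

Definition normH2 (X : mx) : R := ipR X X.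
Definition normY2 (Y : finType) (p : Y -> R) : R := \sum_(y : Y) p y ^+ 2.

(* X is the Moore--Penrose pseudoinverse of phi applied to p: among the
   Hermitian least-squares solutions of phi X = p, the one of minimal norm *)
Definition mp_solution (Y : finType) (mu : Y -> mx) (p : Y -> R) (X : mx) : Prop :=
  let lsq Z := herm Z /\ forall W : mx, herm W ->
      normY2 (fun y => phi mu Z y - p y) <= normY2 (fun y => phi mu W y - p y) in
  lsq X /\ forall Z : mx, lsq Z -> normH2 X <= normH2 Z.

Definition phi_pinv (Y : finType) (mu : Y -> mx) (p : Y -> R) : mx :=
  xget 0 [set X | mp_solution mu p X]%classic.

Definition Pdiamond (Y : finType) (mu : Y -> mx) : set (Y -> R) :=
  [set p | exists rho, density rho /\ p = phi mu rho]%classic.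

Definition Gamma_diamond (Y : finType) (mu : Y -> mx) (Rep : Type)
  (Gamma : mx -> Rep) : (Y -> R) -> Rep :=
  fun p => Gamma (phi_pinv mu p).

Definition unique_argmax (Rep : Type) (f : Rep -> R) (r0 : Rep) : Prop :=
  ([set r0] = [set r | forall r', f r' <= f r])%classic.

Definition q_elicitable (Rep : Type) (Gamma : mx -> Rep) : Prop :=
  exists (s : Rep -> nat -> R) (mu : Rep -> seq mx),
    (forall r, nat_measurement (mu r)) /\
    forall rho, density rho ->
      unique_argmax
        (fun r => \sum_(y < size (mu r)) ipR (nth 0 (mu r) y) rho * s r y)
        (Gamma rho).

Definition c_elicitable (Y : finType) (P : set (Y -> R)) (Rep : Type)
  (Gamma : (Y -> R) -> Rep) : Prop :=
  exists s : Rep -> Y -> R,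
    forall p, P p -> unique_argmax (fun r => \sum_(y : Y) p y * s r y) (Gamma p).

Definition q_identifiable k (G : mx -> 'rV[R]_k) : Prop :=
  forall r, (exists rho, density rho /\ G rho = r) ->
    exists V : 'I_k -> mx, (forall i, herm (V i)) /\
      forall rho, density rho -> (G rho = r <-> forall i, ip (V i) rho = 0).

Definition c_identifiable (Y : finType) (P : set (Y -> R)) k
  (G : (Y -> R) -> 'rV[R]_k) : Prop :=
  forall r, (exists p, P p /\ G p = r) ->
    exists v : 'I_k -> Y -> R,
      forall p, P p -> (G p = r <-> forall i, \sum_(y : Y) v i y * p y = 0).

Definition q_k_elicitable (Rep : Type) (Gamma : mx -> Rep) (k : nat) : Prop :=
  exists (G : mx -> 'rV[R]_k) (psi : 'rV[R]_k -> Rep),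
    q_elicitable G /\ q_identifiable G /\
    forall rho, density rho -> Gamma rho = psi (G rho).

Definition c_k_elicitable (Y : finType) (P : set (Y -> R)) (Rep : Type)
  (Gamma : (Y -> R) -> Rep) (k : nat) : Prop :=
  exists (G : (Y -> R) -> 'rV[R]_k) (psi : 'rV[R]_k -> Rep),
    c_elicitable P G /\ c_identifiable P G /\
    forall p, P p -> Gamma p = psi (G p).

End QuantumElic.

(* least natural number satisfying P, or None (= infinity) if there is none *)
Definition least_nat (P : nat -> Prop) : option nat :=
  if `[< exists k, P k >] then
    Some (xget 0%N [set k | P k /\ forall j, P j -> (k <= j)%N]%classic)
  else None.

Definition elicQ (R : realType) (n : nat) (Rep : Type) (Gamma : 'M[R[i]]_n -> Rep)
  : option nat := least_nat (q_k_elicitable Gamma).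

Definition elicP (R : realType) (Y : finType) (P : set (Y -> R)) (Rep : Type)
  (Gamma : (Y -> R) -> Rep) : option nat := least_nat (c_k_elicitable P Gamma).

(* Main.v *)
Require Import Defs.
From HB Require Import structures.
From mathcomp Require Import all_boot all_order all_algebra.
From mathcomp Require Import boolp classical_sets reals.
From mathcomp Require Import complex.
From mathcomp Require Import lra ring.
Set Implicit Arguments.
Unset Strict Implicit.
Unset Printing Implicit Defensive.
Import Order.TTheory GRing.Theory Num.Theory.
Local Open Scope ring_scope.

Section H.
Variables (R : realType) (n : nat).
Local Notation C := (R[i]).
Local Notation mx := ('M[C]_n).
Local Notation cj := (@conjc R).
Local Notation "x %:C" := (real_complex R x) (format "x %:C").

Lemma cadjE m p (A : 'M[C]_(m,p)) i j : cadj A i j = cj (A j i).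
Proof. by rewrite /cadj !mxE. Qed.

Lemma ipE (A B : mx) : ip A B = \sum_i \sum_j cj (A j i) * B j i.
Proof.
rewrite /ip /mxtrace; apply: eq_bigr => i _; rewrite mxE.
by apply: eq_bigr => j _; rewrite cadjE.
Qed.

Lemma cjM (x y : C) : cj (x * y) = cj x * cj y.
Proof. exact: rmorphM. Qed.
Lemma cjD (x y : C) : cj (x + y) = cj x + cj y.
Proof. exact: rmorphD. Qed.
Lemma cj_sum (I : Type) (r : seq I) (P : pred I) (F : I -> C) :
  cj (\sum_(i <- r | P i) F i) = \sum_(i <- r | P i) cj (F i).
Proof. exact: rmorph_sum. Qed.
Lemma cjK (x : C) : cj (cj x) = x.
Proof. exact: conjcK. Qed.
Lemma cj_real (x : R) : cj (x%:C) = x%:C.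
Proof. exact: conjc_real. Qed.

Lemma ReD (x y : C) : complex.Re (x + y) = complex.Re x + complex.Re y.
Proof. by case: x => a b; case: y. Qed.
Lemma ImD (x y : C) : complex.Im (x + y) = complex.Im x + complex.Im y.
Proof. by case: x => a b; case: y. Qed.
Lemma Re_sum (I : Type) (r : seq I) (P : pred I) (F : I -> C) :
  complex.Re (\sum_(i <- r | P i) F i) = \sum_(i <- r | P i) complex.Re (F i).
Proof.
elim/big_rec2: _ => [|i y x _ h]; [by [] | by rewrite ReD ?h -?h].
Qed.
Lemma Im_sum (I : Type) (r : seq I) (P : pred I) (F : I -> C) :
  complex.Im (\sum_(i <- r | P i) F i) = \sum_(i <- r | P i) complex.Im (F i).
Proof.
elim/big_rec2: _ => [|i y x _ h]; [by [] | by rewrite ImD ?h -?h].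
Qed.
Lemma ReMr (a : R) (z : C) : complex.Re (a%:C * z) = a * complex.Re z.
Proof. case: z => x y /=; by rewrite mul0r subr0. Qed.
Lemma ImMr (a : R) (z : C) : complex.Im (a%:C * z) = a * complex.Im z.
Proof. case: z => x y /=; by rewrite mul0r addr0. Qed.

Lemma hermP (A : mx) : herm A <-> forall i j, cj (A j i) = A i j.
Proof.
split => [h i j | h]; first by rewrite -cadjE h.
by apply/matrixP => i j; rewrite cadjE h.
Qed.

Lemma herm_sum (Y : finType) (c : Y -> R) (A : Y -> mx) :
  (forall y, herm (A y)) -> herm (\sum_y (c y)%:C *: A y).
Proof.
move=> h; apply/hermP => i j; rewrite !summxE cj_sum.
apply: eq_bigr => y _; rewrite !mxE cjM cj_real.
by move/hermP: (h y) => ->.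
Qed.

Lemma ip_sum_l (Y : finType) (c : Y -> R) (A : Y -> mx) (B : mx) :
  ip (\sum_y (c y)%:C *: A y) B = \sum_y (c y)%:C * ip (A y) B.
Proof.
rewrite ipE; under eq_bigr => i _ do under eq_bigr => j _ do
  rewrite summxE cj_sum mulr_suml.
under eq_bigr => i _ do rewrite exchange_big /=.
rewrite exchange_big /=; apply: eq_bigr => y _.
rewrite ipE mulr_sumr; apply: eq_bigr => i _.
rewrite mulr_sumr; apply: eq_bigr => j _.
by rewrite mxE cjM cj_real mulrA.
Qed.

Lemma ipR_sum_l (Y : finType) (c : Y -> R) (A : Y -> mx) (B : mx) :
  ipR (\sum_y (c y)%:C *: A y) B = \sum_y c y * ipR (A y) B.
Proof.
rewrite /ipR ip_sum_l Re_sum; apply: eq_bigr => y _; exact: ReMr.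
Qed.

Lemma ip_real (A B : mx) : herm A -> herm B -> ip A B = (ipR A B)%:C.
Proof.
move=> /hermP hA /hermP hB.
have e : cj (ip A B) = ip A B.
  rewrite !ipE cj_sum exchange_big /=; apply: eq_bigr => i _.
  rewrite cj_sum; apply: eq_bigr => j _.
  by rewrite cjM cjK hB -hA.
rewrite /ipR; move: e; case: (ip A B) => a b /= [] e.
have -> : b = 0 by lra.
by [].
Qed.

Lemma Re_cjxx (x : C) : complex.Re (cj x * x) = complex.Re x ^+ 2 + complex.Im x ^+ 2.
Proof. case: x => a b /=; rewrite !expr2 mulNr opprK. by []. Qed.

Lemma ipR_self0 (X : mx) : ipR X X = 0 -> X = 0.
Proof.
rewrite /ipR ipE Re_sum => h.
apply/matrixP => j i; rewrite mxE.
have hp : forall k : 'I_n, 0 <= complex.Re (\sum_j cj (X j k) * X j k).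
  move=> k; rewrite Re_sum; apply: sumr_ge0 => l _.
  by rewrite Re_cjxx addr_ge0 // sqr_ge0.
have h2 := psumr_eq0P (fun k _ => hp k) h (i:=i) isT.
rewrite Re_sum in h2.
have hq : forall l : 'I_n, 0 <= complex.Re (cj (X l i) * X l i).
  by move=> l; rewrite Re_cjxx addr_ge0 // sqr_ge0.
have h3 := psumr_eq0P (fun l _ => hq l) h2 (i:=j) isT.
move: h3; rewrite Re_cjxx.
case: (X j i) => a b /= h3.
move/eqP: h3; rewrite paddr_eq0 ?sqr_ge0 // !sqrf_eq0 => /andP[/eqP -> /eqP ->].
by [].
Qed.

Lemma cjB (x y : C) : cj (x - y) = cj x - cj y.
Proof. exact: rmorphB. Qed.
Lemma ReB (x y : C) : complex.Re (x - y) = complex.Re x - complex.Re y.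
Proof. by case: x => a b; case: y. Qed.

Lemma ipR_subr (A B D : mx) : ipR A (B - D) = ipR A B - ipR A D.
Proof.
rewrite /ipR !ipE -ReB -sumrB; congr complex.Re; apply: eq_bigr => i _.
by rewrite -sumrB; apply: eq_bigr => j _; rewrite !mxE mulrBr.
Qed.

Lemma herm_sub (A B : mx) : herm A -> herm B -> herm (A - B).
Proof.
move=> /hermP hA /hermP hB; apply/hermP => i j.
by rewrite !mxE cjB hA hB.
Qed.

Lemma phi_inj (Y : finType) (mu : Y -> mx) (Z W : mx) :
  tomo_complete mu -> herm Z -> herm W -> (forall y, phi mu Z y = phi mu W y) -> Z = W.
Proof.
move=> tc hZ hW e; apply/eqP; rewrite -subr_eq0; apply/eqP.
have hD := herm_sub hZ hW.
have [c hc] := tc _ hD.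
apply: ipR_self0.
rewrite {1}hc ipR_sum_l; apply: big1 => y _.
by rewrite ipR_subr; move: (e y); rewrite /phi => ->; rewrite subrr mulr0.
Qed.

Lemma normY2_ge0 (Y : finType) (p : Y -> R) : 0 <= normY2 p.
Proof. by apply: sumr_ge0 => y _; exact: sqr_ge0. Qed.

Lemma normY2_eq0 (Y : finType) (p : Y -> R) : normY2 p = 0 -> forall y, p y = 0.
Proof.
move=> h y; have := psumr_eq0P (fun y _ => sqr_ge0 (p y)) h (i:=y) isT.
by move/eqP; rewrite sqrf_eq0 => /eqP.
Qed.

Lemma pinv_phi (Y : finType) (mu : Y -> mx) (rho : mx) :
  tomo_complete mu -> herm rho -> phi_pinv mu (phi mu rho) = rho.
Proof.
move=> tc hr.
have lsqE : forall Z, herm Z -> (forall W : mx, herm W ->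
      normY2 (fun y => phi mu Z y - phi mu rho y) <=
      normY2 (fun y => phi mu W y - phi mu rho y)) -> Z = rho.
  move=> Z hZ hle; apply: (phi_inj tc hZ hr) => y.
  apply/eqP; rewrite -subr_eq0; apply/eqP; apply: (normY2_eq0 (p := fun y => phi mu Z y - phi mu rho y)).
  apply/eqP; rewrite eq_le normY2_ge0 andbT.
  have := hle rho hr.
  have -> : normY2 (fun y => phi mu rho y - phi mu rho y) = 0.
    by rewrite /normY2; apply: big1 => y' _; rewrite subrr expr0n.
  by [].
rewrite /phi_pinv; apply: xget_unique.
  rewrite /= /mp_solution /=; split.
    split => // W hW.
    have -> : normY2 (fun y => phi mu rho y - phi mu rho y) = 0.
      by rewrite /normY2; apply: big1 => y' _; rewrite subrr expr0n.
    exact: normY2_ge0.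
  by move=> Z [hZ hle]; rewrite (lsqE Z hZ hle).
by move=> Z; rewrite /= /mp_solution /= => -[[hZ hle] _]; exact: lsqE.
Qed.

Lemma realC_eq0 (x : R) : x%:C = 0 <-> x = 0.
Proof. by split => [[]|->]. Qed.

Lemma density_herm (rho : mx) : density rho -> herm rho.
Proof. by case=> -[]. Qed.

Lemma ip_sum_real (Y : finType) (v : Y -> R) (mu : Y -> mx) (rho : mx) :
  (forall y, herm (mu y)) -> herm rho ->
  (ip (\sum_y (v y)%:C *: mu y) rho = 0 <-> \sum_y v y * phi mu rho y = 0).
Proof.
move=> hm hr; rewrite ip_real //; last exact: herm_sum.
by rewrite ipR_sum_l realC_eq0.
Qed.

Lemma q_to_c (Y : finType) (mu : Y -> mx) (Rep : Type) (Gamma : mx -> Rep) k :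
  measurement mu -> tomo_complete mu -> q_k_elicitable Gamma k ->
  c_k_elicitable (Pdiamond mu) (Gamma_diamond mu Gamma) k.
Proof.
move=> hmeas tc [G [psi [[s [muq [hm hs]]] [hid hpsi]]]].
have hmh : forall y, herm (mu y) by move=> y; exact: (hmeas.1 y).1.
exists (fun p => G (phi_pinv mu p)), psi; split; [|split].
- have hc : forall ry : 'rV[R]_k * nat, exists c : Y -> R,
      (ry.2 < size (muq ry.1))%N -> nth 0 (muq ry.1) ry.2 = \sum_z (c z)%:C *: mu z.
    move=> [r y] /=; case: (ltnP y (size (muq r))) => hy.
      have [c hc] := tc _ ((hm r).1 y hy).1.
      by exists c.
    by exists (fun _ => 0).
  have [cf hcf] := choice hc.
  exists (fun r z => \sum_(y < size (muq r)) s r y * cf (r, nat_of_ord y) z).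
  move=> p [rho [hd ->]].
  rewrite /= pinv_phi //; last exact: density_herm.
  have -> : (fun r => \sum_z phi mu rho z * \sum_(y < size (muq r)) s r y * cf (r, nat_of_ord y) z)
     = (fun r => \sum_(y < size (muq r)) ipR (nth 0 (muq r) y) rho * s r y).
    apply: funext => r.
    under eq_bigr => z _ do rewrite mulr_sumr.
    rewrite exchange_big /=; apply: eq_bigr => y _.
    rewrite (hcf (r, nat_of_ord y)) //= ipR_sum_l mulr_suml.
    by apply: eq_bigr => z _; rewrite /phi; ring.
  exact: hs.
- move=> r [p [[rho [hd ->]]]]; rewrite pinv_phi //; last exact: density_herm.
  move=> hGr.
  have [V [hV hVe]] := hid r (ex_intro _ rho (conj hd hGr)).
  have hv : forall i, exists c : Y -> R, V i = \sum_z (c z)%:C *: mu z.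
    by move=> i; exact: tc.
  have [v hvv] := choice hv.
  exists v => p' [rho' [hd' ->]].
  rewrite pinv_phi //; last exact: density_herm.
  rewrite hVe //; split => h i.
    by apply/(ip_sum_real (v i) hmh (density_herm hd')); rewrite -hvv.
  by rewrite hvv; apply/(ip_sum_real (v i) hmh (density_herm hd')).
- move=> q0 [rho0 [hd0 ->]].
  by rewrite /Gamma_diamond pinv_phi ?hpsi //; exact: density_herm.

Qed.

Lemma c_to_q (Y : finType) (mu : Y -> mx) (Rep : Type) (Gamma : mx -> Rep) k :
  measurement mu -> tomo_complete mu ->
  c_k_elicitable (Pdiamond mu) (Gamma_diamond mu Gamma) k -> q_k_elicitable Gamma k.
Proof.
move=> hmeas tc [G [psi [[sh hs] [hid hpsi]]]].
have hmh : forall y, herm (mu y) by move=> y; exact: (hmeas.1 y).1.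
have hnm : nat_measurement (map mu (enum Y)).
  split.
    move=> y; rewrite size_map => hy.
    have [y0 _] : exists y0 : Y, true by move: hy; case: (enum Y) => // a _ _; exists a.
    by rewrite (nth_map y0) //; exact: hmeas.1.
  by rewrite big_map big_enum /=; exact: hmeas.2.
exists (fun rho => G (phi mu rho)), psi; split; [|split].
- case: (pickP (@predT Y)) => [y0 _ | Y0].
    exists (fun r i => sh r (nth y0 (enum Y) i)), (fun _ => map mu (enum Y)).
    split => // rho hd.
    have -> : (fun r => \sum_(y < size (map mu (enum Y))) ipR (nth 0 (map mu (enum Y)) y) rho *
                sh r (nth y0 (enum Y) y)) = (fun r => \sum_z phi mu rho z * sh r z).
      apply: funext => r.
      rewrite -[X in _ = X]big_enum /= (big_nth y0) big_mkord size_map.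
      by apply: eq_bigr => i _; rewrite (nth_map y0).
    by apply: hs; exists rho.
  exists (fun _ _ => 0), (fun _ => map mu (enum Y)); split => // rho [_ htr].
  exfalso.
  have h1 : \sum_y mu y = 0 by apply: big1 => y _; have := Y0 y.
  move: htr; rewrite -[rho]mulmx1 -hmeas.2 h1 mulmx0 mxtrace0 => /eqP.
  by rewrite eq_sym oner_eq0.
- move=> r [rho [hd hGr]].
  have [v hv] := hid r (ex_intro _ (phi mu rho) (conj (ex_intro _ rho (conj hd erefl)) hGr)).
  exists (fun i => \sum_y (v i y)%:C *: mu y); split.
    by move=> i; exact: herm_sum.
  move=> rho' hd'; rewrite hv; last by exists rho'.
  split => h i.
    by apply/(ip_sum_real (v i) hmh (density_herm hd')).
  by apply/(ip_sum_real (v i) hmh (density_herm hd')).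
- move=> rho hd.
  rewrite -hpsi; last by exists rho.
  by rewrite /Gamma_diamond pinv_phi //; exact: density_herm.
Qed.
End H.

Theorem corollary6p3 (R : realType) (n : nat) (Y : finType)
  (mu : Y -> 'M[R[i]]_n) (Rep : Type) (Gamma : 'M[R[i]]_n -> Rep) :
  measurement mu -> tomo_complete mu ->
  elicQ Gamma = elicP (Pdiamond mu) (Gamma_diamond mu Gamma).
Proof.
move=> hm tc; rewrite /elicQ /elicP; congr least_nat.
apply: funext => k; apply: propext; split.
  exact: q_to_c.
exact: c_to_q.
Qed.
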